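(* Let $H$ be a finite group, let $N$ be a subgroup of the center $Z(H)$, let $g \colon H \to H' = H/N$ be the canonical projection, and let $\psi \colon H \to \Gamma'$ be a homomorphism to an abelian group $\Gamma'$. Suppose $\ker g \cap \ker \psi = \{e\}$. Let $\mathcal{A}$ be an abelian subgroup of $H$ of the smallest possible index among abelian subgroups of $H$, and $\mathcal{A}'$ an abelian subgroup of $H'$ of the smallest possible index among abelian subgroups of $H'$. Then $[H : \mathcal{A}] = [H' : \mathcal{A}']$.
   Context: $e$ denotes the neutral element, $Z(H)$ the center of $H$, and $[A:B]$ the index of a subgroup $B$ in a group $A$. *)

(* Defs.v *)
From mathcomp Require Import all_boot all_fingroup all_solvable.
Set Implicit Arguments. Unset Strict Implicit. Unset Printing Implicit Defensive.
Local Open Scope group_scope.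

Definition min_index_abelian (gT : finGroupType) (G A : {group gT}) : Prop :=
  [/\ A \subset G, abelian A &
      forall B : {group gT}, B \subset G -> abelian B -> #|G : A| <= #|G : B|].

(* Main.v *)
Require Import Defs.
From mathcomp Require Import all_boot all_fingroup all_solvable.
Set Implicit Arguments. Unset Strict Implicit. Unset Printing Implicit Defensive.
Local Open Scope group_scope.

Theorem mainTheorem4 (gT rT : finGroupType) (H N : {group gT})
    (psi : {morphism H >-> rT})
    (hN : N \subset 'Z(H))
    (hGamma : abelian [set: rT])
    (hker : 'ker_H (coset N) :&: 'ker psi = 1)
    (A : {group gT}) (A' : {group coset_of N})
    (hA : min_index_abelian H A)
    (hA' : min_index_abelian (H / N)%G A') :
  #|H : A| = #|(H / N) : A'|.
Proof.
have nNH : N <| H := sub_center_normal hN.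
have nH : H \subset 'N(N) := normal_norm nNH.
have sNH : N \subset H := normal_sub nNH.
case: hA => sAH abA minA; case: hA' => sA'H abA' minA'.
apply/eqP; rewrite eqn_leq; apply/andP; split.
- case: (inv_quotientS nNH sA'H) => L defL sNL sLH.
  have abL : abelian L.
    have nNL : L \subset 'N(N) := subset_trans sLH nH.
    have d1 : L^`(1) \subset N by apply: der1_min nNL _; rewrite -defL.
    have d2 : L^`(1) \subset 'ker psi.
      rewrite ker_trivg_morphim (subset_trans (der1_subG L)) //=.
      by rewrite /derived_at /= morphimR //; apply/trivgP/commG1P; exact: sub_abelian_cent2 hGamma (subsetT _) (subsetT _).
    apply/derG1P/trivgP; rewrite -hker; apply/subsetIP; split=> //.
    apply/subsetIP; split; first exact: subset_trans d1 sNH.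
    by rewrite ker_coset.
  have -> : #|(H / N) : A'| = #|H : L| by rewrite defL index_quotient_eq // (subset_trans (subsetIr _ _)).
  exact: minA.
- apply: (leq_trans (minA' (A / N)%G (quotientS N sAH) (quotient_abelian N abA))).
  apply: dvdn_leq; first exact: indexg_gt0.
  apply: index_quotient; exact: subset_trans (subsetIl _ _) nH.
Qed.
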